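(* If the system $\dot{z}(t) = A_{-1}\dot{z}(t-1)+L z_t+Bu$, $t\ge 0$, is exactly controllable at time $T$, then for any matrix $P\in\mathbb{C}^{r\times n}$ the perturbed system $$\dot z(t) = (A_{-1}+BP)\dot z(t-1) + L z_t + Bu$$ is exactly controllable at the same time $T$.
   Context: Consider the neutral type time-delay system $\dot{z}(t) = A_{-1}\dot{z}(t-1)+L z_t+Bu$, $t\ge 0$, where $A_{-1}\in\mathbb{R}^{n\times n}$, $B\in\mathbb{R}^{n\times r}$ are constant matrices, $z_t:[-1,0]\to\mathbb{C}^n$ is the history $z_t(s)=z(t+s)$, and the delay operator is $L f=\int_{-1}^0 A_2(\theta)\frac{\mathrm{d}}{\mathrm{d}\theta}f(\theta)\,\mathrm{d}\theta+\int_{-1}^0 A_3(\theta)f(\theta)\,\mathrm{d}\theta$, with $A_2,A_3$ $n\times n$ matrices whose entries belong to $L_2([-1,0],\mathbb{C})$. The system is said to be exactly controllable at time $T$ if for every $f\in H^1(T-1,T;\mathbb{C}^n)$ there exists a control $u\in L_2(0,T;\mathbb{C}^r)$ such that the solution with zero initial condition $z(t)=0$, $t\in[-1,0]$, satisfies $z(t)=f(t)$ for $t\in[T-1,T]$ (equivalently, the reachability set from $0$ at time $T$ of the associated operator model on $M_2=\mathbb{C}^n\times L_2(-1,0;\mathbb{C}^n)$ equals the domain $\mathcal{D}(\mathcal{A})$ of the system operator). *)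

(* Defs.v *)
From HB Require Import structures.
From mathcomp Require Import all_boot all_order all_algebra.
From mathcomp Require Import all_classical all_reals all_analysis.
From mathcomp.real_closed Require Import complex.

Set Implicit Arguments.
Unset Strict Implicit.
Unset Printing Implicit Defensive.

Import Order.TTheory GRing.Theory Num.Theory.
Local Open Scope classical_set_scope.
Local Open Scope ring_scope.

Section Defs.
Variable R : realType.
Local Notation C := R[i].
Local Notation mu := (@lebesgue_measure R).

Definition cint (D : set R) (f : R -> C) : C :=
  Complex (Rintegral mu D (fun x => complex.Re (f x))) (Rintegral mu D (fun x => complex.Im (f x))).

Definition L2c (a b : R) (f : R -> C) : Prop :=
  [/\ measurable_fun `[a, b] (fun x => complex.Re (f x)),
      measurable_fun `[a, b] (fun x => complex.Im (f x)) &
      (\int[mu]_(x in `[a, b]) ((complex.Re (f x)) ^+ 2 + (complex.Im (f x)) ^+ 2)%:E < +oo)%E].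

Definition L2v (m : nat) (a b : R) (f : R -> 'cV[C]_m) : Prop :=
  forall i : 'I_m, L2c a b (fun x => f x i 0).

Definition cintv (m : nat) (D : set R) (f : R -> 'cV[C]_m) : 'cV[C]_m :=
  \col_i cint D (fun x => f x i 0).

Definition H1v (m : nat) (a b : R) (f : R -> 'cV[C]_m) : Prop :=
  exists g : R -> 'cV[C]_m, L2v a b g /\
    forall t, a <= t <= b -> f t = f a + cintv `[a, t] g.

(* L z_t = int_{-1}^0 A2(th) zdot(t+th) dth + int_{-1}^0 A3(th) z(t+th) dth,
   where w is the derivative of z *)
Definition delayL (n : nat) (A2 A3 : 'I_n -> 'I_n -> R -> C)
    (z w : R -> 'cV[C]_n) (t : R) : 'cV[C]_n :=
  \col_i \sum_j (cint `[-1, 0] (fun th => A2 i j th * w (t + th) j 0)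
               + cint `[-1, 0] (fun th => A3 i j th * z (t + th) j 0)).

(* z is the (H^1) solution on [-1,T] of
     zdot(t) = Am1 zdot(t-1) + L z_t + B u(t),  t in [0,T],
   with zero initial condition z = 0 on [-1,0] *)
Definition is_solution (n r : nat) (Am1 : 'M[C]_n) (B : 'M[C]_(n, r))
    (A2 A3 : 'I_n -> 'I_n -> R -> C) (T : R)
    (u : R -> 'cV[C]_r) (z : R -> 'cV[C]_n) : Prop :=
  exists w : R -> 'cV[C]_n,
    [/\ L2v (-1) T w,
        (forall t, -1 <= t <= T -> z t = cintv `[-1, t] w),
        (forall t, -1 <= t <= 0 -> z t = 0) &
        {ae mu, forall t, 0 <= t <= T ->
            w t = Am1 *m w (t - 1) + delayL A2 A3 z w t + B *m u t}].

Definition exactly_controllable (n r : nat) (Am1 : 'M[C]_n) (B : 'M[C]_(n, r))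
    (A2 A3 : 'I_n -> 'I_n -> R -> C) (T : R) : Prop :=
  forall f : R -> 'cV[C]_n, H1v (T - 1) T f ->
    exists u : R -> 'cV[C]_r, L2v 0 T u /\
      exists z : R -> 'cV[C]_n, is_solution Am1 B A2 A3 T u z /\
        forall t, T - 1 <= t <= T -> z t = f t.

End Defs.

Definition cmx (R : realType) (m k : nat) (M : 'M[R]_(m, k)) : 'M[R[i]]_(m, k) :=
  map_mx (fun x => Complex x 0) M.

(* Main.v *)
Require Import Defs.
From HB Require Import structures.
From mathcomp Require Import all_boot all_order all_algebra.
From mathcomp Require Import all_classical all_reals all_analysis measurable_realfun.
From mathcomp.real_closed Require Import complex.
From mathcomp Require Import lra.
Import Order.TTheory GRing.Theory Num.Theory.
Local Open Scope classical_set_scope.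
Local Open Scope ring_scope.

Section H.
Variable R : realType.
Local Notation mu := (@lebesgue_measure R).

Definition L2r (a b : R) (h : R -> R) : Prop :=
  measurable_fun `[a, b] h /\ (\int[mu]_(x in `[a, b]) (h x ^+ 2)%:E < +oo)%E.

Lemma msq (a b : R) (h : R -> R) : measurable_fun `[a, b] h ->
  measurable_fun `[a, b] (fun x => (h x ^+ 2)%:E).
Proof. by move=> mh; apply/measurable_EFinP; exact: measurable_funX. Qed.

Lemma L2r_add (a b : R) (h g : R -> R) : L2r a b h -> L2r a b g -> L2r a b (fun x => h x + g x).
Proof.
move=> [mh ih] [mg ig]; split; first exact: measurable_funD.
apply: (le_lt_trans (y := (\int[mu]_(x in `[a, b]) ((h x ^+ 2)%:E + (g x ^+ 2)%:E)
   + \int[mu]_(x in `[a, b]) ((h x ^+ 2)%:E + (g x ^+ 2)%:E))%E)); last first.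
  rewrite ge0_integralD//; try (by move=> *; rewrite lee_fin sqr_ge0);
   try exact: msq.
  exact: (lte_add_pinfty (lte_add_pinfty ih ig) (lte_add_pinfty ih ig)).
rewrite -ge0_integralD//; last 4 first.
- by move=> *; apply: adde_ge0; rewrite lee_fin sqr_ge0.
- by apply: emeasurable_funD; exact: msq.
- by move=> *; apply: adde_ge0; rewrite lee_fin sqr_ge0.
- by apply: emeasurable_funD; exact: msq.
apply: ge0_le_integral => //.
- by move=> *; rewrite lee_fin sqr_ge0.
- by apply: msq; exact: measurable_funD.
- by apply: emeasurable_funD; apply: emeasurable_funD; exact: msq.
move=> x _; rewrite -!EFinD lee_fin.
have := sqr_ge0 (h x - g x); rewrite sqrrB sqrrD; lra.
Qed.

Lemma L2r_scale (a b c : R) (h : R -> R) : L2r a b h -> L2r a b (fun x => c * h x).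
Proof.
move=> [mh ih]; split; first exact: measurable_funM.
under eq_integral do rewrite exprMn EFinM.
rewrite ge0_integralZl//; first by apply: lte_mul_pinfty => //; rewrite lee_fin sqr_ge0.
- exact: msq.
- by move=> *; rewrite lee_fin sqr_ge0.
- by rewrite lee_fin sqr_ge0.
Qed.


Lemma mshift (c : R) : measurable_fun setT (fun x : R => x + c).
Proof. by apply: measurable_funD => //; exact: measurable_cst. Qed.

Lemma lebesgue_measure_shift (c : R) (A : set (measurableTypeR R)) : measurable A ->
  pushforward mu ((fun x : R => x + c) : R -> measurableTypeR R) A = mu A.
Proof.
move=> mA; apply/esym/lebesgue_measure_unique => //=.
  exact: mshift.
move=> _ _ [[a b]] _ <-.
rewrite /pushforward.
have -> : (fun x : R => x + c) @^-1` `]a, b] = `]a - c, b - c]%classic.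
  by apply/seteqP; split => x /=; rewrite !in_itv /= lerBrDr ltrBlDr.
rewrite !lebesgue_measure_itv /= !lte_fin ltrD2r.
by rewrite -!EFinD; congr (if _ then _%:E else _); rewrite opprB addrA subrK addrC.
Qed.

Lemma L2r_shift (T : R) (h : R -> R) : L2r (-1) T h -> L2r 0 T (fun t => h (t - 1)).
Proof.
move=> [mh ih].
have sub : (fun t : R => t + -1) @` `[0, T] `<=` `[-1, T].
  move=> _ [t /= + <-]; rewrite !in_itv /= => /andP[t0 tT].
  by apply/andP; split; lra.
have mc : measurable_fun `[0, T] (fun t : R => h (t + -1)).
  apply: (measurable_comp (F := `[-1, T]) _ sub mh) => //.
  exact: measurable_funS (mshift (-1)).
split; first exact: mc.
have e : (\int[mu]_(x in `[0%R, T]) ((h (x - 1)%R) ^+ 2)%:E =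
         \int[mu]_(x in `[(-1)%R, (T - 1)%R]) ((h x) ^+ 2)%:E)%E.
  transitivity (\int[pushforward mu ((fun x : R => x + -1)%R : R -> measurableTypeR R)]_(x in `[(-1)%R, (T - 1)%R]) ((h x) ^+ 2)%:E)%E; last first.
    apply: eq_measure_integral; first exact: mshift.
    move=> mp B mB _; exact: (lebesgue_measure_shift (-1) B mB).
  rewrite ge0_integral_pushforward; last 4 first.
  - exact: mshift.
  - exact: measurable_itv.
  - have sub2 : (`[-1, T - 1] : set R) `<=` `[-1, T].
      by move=> x /=; rewrite !in_itv /= => /andP[x1 xT]; apply/andP; split; lra.
    have mh2 := measurable_funS (measurable_itv _) sub2 (msq _ _ _ mh).
    exact mh2.
  - by move=> *; rewrite lee_fin sqr_ge0.
  have pre : ((fun x : R => x + -1) @^-1` `[-1, T - 1]%classic) = `[0, T]%classic.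
    by apply/seteqP; split=> x /=; rewrite !in_itv /= => /andP[x1 xT]; apply/andP; split; lra.
  rewrite pre.
  by [].

rewrite e; apply: le_lt_trans ih.
apply: ge0_subset_integral => //.
- exact: msq.
- by move=> *; rewrite lee_fin sqr_ge0.
- move=> x /=; rewrite !in_itv /= => /andP[x1 xT].
  by apply/andP; split; lra.
Qed.

Local Notation C := R[i].

Arguments L2r_add {a b h g}.
Arguments L2r_scale {a b} c {h}.
Arguments L2r_shift {T h}.
Arguments msq {a b h}.

Lemma L2cP (a b : R) (f : R -> C) : L2c a b f <->
  L2r a b (fun x => complex.Re (f x)) /\ L2r a b (fun x => complex.Im (f x)).
Proof.
have mab : measurable (`[a, b] : set R) by exact: measurable_itv.
split.
- case=> mr mi fin.
  have mE : measurable_fun `[a, b]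
      (fun x => ((complex.Re (f x)) ^+ 2 + (complex.Im (f x)) ^+ 2)%:E).
    by apply/measurable_EFinP; apply: measurable_funD; exact: measurable_funX.
  split; split => //; apply: le_lt_trans fin; apply: ge0_le_integral => //.
  + by move=> *; rewrite lee_fin sqr_ge0.
  + exact: msq.
  + by move=> x _; rewrite lee_fin lerDl sqr_ge0.
  + by move=> *; rewrite lee_fin sqr_ge0.
  + exact: msq.
  + by move=> x _; rewrite lee_fin lerDr sqr_ge0.
- case=> [[mr ir] [mi ii]]; split => //.
  under eq_integral do rewrite EFinD.
  rewrite ge0_integralD //; first exact: lte_add_pinfty.
  + by move=> *; rewrite lee_fin sqr_ge0.
  + exact: msq.
  + by move=> *; rewrite lee_fin sqr_ge0.
  + exact: msq.
Qed.

Lemma L2r_eq (a b : R) (h g : R -> R) : (forall x, h x = g x) -> L2r a b h -> L2r a b g.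
Proof. by move=> e; have -> : h = g by apply/funext. Qed.

Lemma L2c_add (a b : R) (f g : R -> C) : L2c a b f -> L2c a b g -> L2c a b (fun x => f x + g x).
Proof.
move=> /L2cP[fr fi] /L2cP[gr gi]; apply/L2cP; split.
- apply: L2r_eq (L2r_add fr gr) => x; by case: (f x) => ? ?; case: (g x).
- apply: L2r_eq (L2r_add fi gi) => x; by case: (f x) => ? ?; case: (g x).
Qed.

Lemma L2c_scale (a b : R) (c : C) (f : R -> C) : L2c a b f -> L2c a b (fun x => c * f x).
Proof.
move=> /L2cP[fr fi]; apply/L2cP; split.
- apply: L2r_eq (L2r_add (L2r_scale (complex.Re c) fr) (L2r_scale (- complex.Im c) fi)) => x.
  by case: c => ? ?; case: (f x) => ? ? /=; rewrite mulNr.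
- apply: L2r_eq (L2r_add (L2r_scale (complex.Re c) fi) (L2r_scale (complex.Im c) fr)) => x.
  by case: c => ? ?; case: (f x).
Qed.

Lemma L2c0 (a b : R) : L2c a b (fun _ => 0).
Proof.
apply/L2cP; split; split=> /=; try exact: measurable_cst;
  (under eq_integral do rewrite expr0n /=); rewrite integral0 //.
Qed.

Lemma L2c_sum (a b : R) (I : Type) (s : seq I) (F : I -> R -> C) :
  (forall j, L2c a b (F j)) -> L2c a b (fun x => \sum_(j <- s) F j x).
Proof.
move=> HF; elim: s => [|j s IH].
  by under eq_fun do rewrite big_nil; exact: L2c0.
under eq_fun do rewrite big_cons.
exact: L2c_add.
Qed.

Lemma L2c_shift (T : R) (f : R -> C) : L2c (-1) T f -> L2c 0 T (fun t => f (t - 1)).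
Proof.
move=> /L2cP[fr fi]; apply/L2cP; split.
- exact: (L2r_shift (h := fun x => complex.Re (f x)) fr).
- exact: (L2r_shift (h := fun x => complex.Im (f x)) fi).
Qed.

End H.

Theorem lemma1 (R : realType) (n r : nat) (Am1 : 'M[R]_n) (B : 'M[R]_(n, r))
    (A2 A3 : 'I_n -> 'I_n -> R -> R[i]) (T : R) (P : 'M[R[i]]_(r, n)) :
  (forall i j, L2c (-1) 0 (A2 i j)) ->
  (forall i j, L2c (-1) 0 (A3 i j)) ->
  exactly_controllable (cmx Am1) (cmx B) A2 A3 T ->
  exactly_controllable (cmx Am1 + cmx B *m P) (cmx B) A2 A3 T.
Proof.
move=> _ _ Hc f Hf.
have [u [Hu [z [[w [Lw Hzw Hz0 Hae]] Hzf]]]] := Hc f Hf.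
exists (fun t => u t - P *m w (t - 1)); split.
  move=> i.
  have -> : (fun x => (u x - P *m w (x - 1)) i 0) =
      (fun x => u x i 0 + (-1) * \sum_(j <- index_enum 'I_n) (P i j * w (x - 1) j 0)).
    by apply/funext => x; rewrite !mxE mulN1r.
  apply: L2c_add; first exact: Hu.
  apply: L2c_scale; apply: L2c_sum => j.
  apply: L2c_scale.
  exact: (@L2c_shift R T (fun x => w x j 0) (Lw j)).
exists z; split => //; exists w; split => //.
case: Hae => N [mN N0 sub]; exists N; split => // t /= nQ.
apply: sub => /= Ht; apply: nQ => /Ht ->.
rewrite mulmxDl mulmxBr mulmxA -!addrA; congr (_ + _).
by rewrite addrCA; congr (_ + _); rewrite addrC subrK.
Qed.
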